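(* Assume $\mu=\mathbb{E}[R]<\infty$. Then for every $\beta\in(0,1)$ there exists $\alpha=\alpha(\beta,\mu)<1$ such that $$\lim_{n\to\infty}\mathbb{P}(A_\alpha(\beta))=0,\qquad A_\alpha(\beta)=\{\exists\,x\neq y\in\mathcal{V}_\alpha:\ |x-y|<n^\beta\},$$ where $\mathcal{V}_\alpha=(\mathbb{Z}/n\mathbb{Z})\setminus X_{\alpha n\ln n/\mu}$.
   Context: Covering process: $R$ takes values in $\{1,2,\dots\}$, $f(r)=\mathbb{P}(R\ge r)$. On $\mathbb{Z}/n\mathbb{Z}$, let $(R_k)$ be i.i.d. copies of $R$, $(U_k)$ i.i.d. uniform on $\mathbb{Z}/n\mathbb{Z}$, independent; $\mathcal{O}_k=\{U_k,\dots,U_k+R_k-1\}$ (mod $n$), $C_0=\emptyset$, $C_k=C_{k-1}\cup\mathcal{O}_k$; with an independent rate-one Poisson process $N(t)$, $X_t=C_{N(t)}$. $|x-y|$ is the distance in the torus $\mathbb{Z}/n\mathbb{Z}$. The parameter $\alpha$ is taken in $(0,1)$. *)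

(* Defs.v *)
From HB Require Import structures.
From mathcomp Require Import all_boot all_order all_algebra.
From mathcomp Require Import all_classical all_reals all_analysis.
Set Implicit Arguments. Unset Strict Implicit. Unset Printing Implicit Defensive.
Import Order.TTheory GRing.Theory Num.Theory.
Import numFieldNormedType.Exports.
Local Open Scope ring_scope.

(* The torus Z/nZ is represented by 'I_n, with arithmetic mod n. *)

(* Arc O = {u, u+1, ..., u+r-1} (mod n). *)
Definition arc (n : nat) (u : 'I_n) (r : nat) : {set 'I_n} :=
  [set x : 'I_n | ((x + n - u) %% n < r)%N].

Definition tdist (n : nat) (x y : 'I_n) : nat :=
  minn ((x + n - y) %% n) ((y + n - x) %% n).

Section Covering.
Variable R : realType.
(* p r = P(R = r), a probability distribution on nat with p 0 = 0. *)
Variable p : nat -> R.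
Variable n : nat.

(* One step of the covering process: probability that C_k = B given
   C_{k-1} = A, where O_k = arc U_k R_k with U_k uniform on Z/nZ and
   R_k of law p, independent. *)
Definition step (A B : {set 'I_n}) : R :=
  \sum_(u : 'I_n) n%:R^-1 *
    limn (series (fun r => p r * (A :|: arc u r == B)%:R)).

(* Law of C_k : dist k B = P(C_k = B), C_0 = set0. *)
Fixpoint dist (k : nat) (B : {set 'I_n}) : R :=
  match k with
  | 0 => (B == finset.set0)%:R
  | k'.+1 => \sum_(A : {set 'I_n}) dist k' A * step A B
  end.

(* P(X_t \in E) where X_t = C_{N(t)}, N a rate-one Poisson process
   independent of everything else: P(N(t) = k) = e^{-t} t^k / k!. *)
Definition probX (t : R) (E : pred {set 'I_n}) : R :=
  limn (series (fun k => expR (- t) * t ^+ k / (k`!)%:R *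
                      \sum_(B : {set 'I_n} | E B) dist k B)).

(* The event A_alpha(beta) in terms of the covered set X:
   there exist x <> y uncovered (i.e. in V = Z/nZ \ X) with |x-y| < n^beta. *)
Definition close_pair (beta : R) (X : {set 'I_n}) : bool :=
  [exists x : 'I_n, exists y : 'I_n,
     [&& x != y, x \notin X, y \notin X &
         ((tdist x y)%:R < (n%:R : R) `^ beta)]].

Definition probA (mu alpha beta : R) : R :=
  probX (alpha * n%:R * ln (n%:R) / mu) (close_pair beta).

End Covering.

(* Main.v *)
Require Import Defs.
From HB Require Import structures.
From mathcomp Require Import all_boot all_order all_algebra.
From mathcomp Require Import all_classical all_reals all_analysis.
From mathcomp Require Import zify ring lra.
Import Order.TTheory GRing.Theory Num.Theory.
Import numFieldNormedType.Exports.
Local Open Scope ring_scope.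

Lemma modsub (n x j : nat) : (x < n)%N -> (j < n)%N ->
  ((x + n - j) %% n = if (j <= x)%N then x - j else x + n - j)%N.
Proof.
move=> xn jn; case: leqP => jx.
  by rewrite -addnBAC // modnDr modn_small // ltn_subLR; lia.
by rewrite modn_small //; lia.
Qed.

Section Geo.
Variable n : nat.

Definition avoidb' (x y : 'I_n) (B : {set 'I_n}) := (x \notin B) && (y \notin B).
Definition hitset' x y r := [set u : 'I_n | ~~ avoidb' x y (Defs.arc u r)].

Lemma card_ge (S : {set 'I_n}) (f : 'I_n -> nat) m :
  (forall j, (j < m)%N -> exists2 u, u \in S & f u = j) -> (m <= #|S|)%N.
Proof.
move=> h; rewrite cardE -(size_map f) -(size_iota 0 m).
apply: uniq_leq_size; first exact: iota_uniq.
move=> j; rewrite mem_iota add0n => /= /h [u uS <-].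
by apply: map_f; rewrite mem_enum.
Qed.

Lemma card_le (f : 'I_n -> nat) m : injective f ->
  (#|[set u | (f u < m)%N]| <= m)%N.
Proof.
move=> fi; rewrite cardE -(size_map f) -[X in (_ <= X)%N](size_iota 0 m).
apply: uniq_leq_size; first by rewrite (map_inj_uniq fi) enum_uniq.
by move=> j /mapP [u]; rewrite mem_enum inE => um ->; rewrite mem_iota add0n.
Qed.

Lemma exists_u (z : 'I_n) j : (j < n)%N -> exists u : 'I_n, ((z + n - u) %% n)%N = j.
Proof.
move=> jn; have n0 : (0 < n)%N by lia.
exists (Ordinal (ltn_pmod (z + n - j) n0)) => /=.
have zn := ltn_ord z.
have v := (@modsub n z j zn jn).
have wn : ((z + n - j) %% n < n)%N by rewrite ltn_mod.
rewrite (@modsub n z _ zn wn) v.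
by case: (leqP j z) => jz; case: leqP; lia.
Qed.

Lemma geo_aux (x y : 'I_n) r m : (r <= n)%N -> (m <= r)%N ->
  (forall u : 'I_n, ((y + n - u) %% n < m)%N -> (r <= (x + n - u) %% n)%N) ->
  (r + m <= #|hitset' x y r|)%N.
Proof.
move=> rn mr h.
pose S1 := [set u : 'I_n | ((x + n - u) %% n < r)%N].
pose S2 := [set u : 'I_n | ((y + n - u) %% n < m)%N].
have d : [disjoint S1 & S2].
  apply/pred0P => u /=; rewrite !inE; apply/negP => /andP [h1 h2]; have := h u h2; lia.
have sub : S1 :|: S2 \subset hitset' x y r.
  apply/fintype.subsetP => u; rewrite !inE /avoidb' !inE negb_and !negbK.
  case/orP => H; apply/orP; [left | right]; lia.
apply: leq_trans (subset_leq_card sub); rewrite cardsU.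
rewrite (_ : S1 :&: S2 = finset.set0); last by apply/finset.setP => u; move/pred0P: d => /(_ u); rewrite !inE => ->.
rewrite cards0 subn0 leq_add //.
  apply: (@card_ge _ (fun u : 'I_n => ((x + n - u) %% n)%N)) => j jr.
  have [u hu] := @exists_u x j (leq_trans jr rn); exists u => //; rewrite inE hu; lia.
apply: (@card_ge _ (fun u : 'I_n => ((y + n - u) %% n)%N)) => j jr.
have [u hu] := @exists_u y j (leq_trans jr (leq_trans mr rn)); exists u => //; rewrite inE hu; lia.
Qed.

Lemma hitset'C x y r : hitset' x y r = hitset' y x r.
Proof. by apply/finset.setP => u; rewrite !inE /avoidb' andbC. Qed.

Lemma geo (x y : 'I_n) r : x != y -> (r.*2 <= n)%N ->
  (r + minn r (tdist x y) <= #|hitset' x y r|)%N.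
Proof.
move=> xy r2; have xn := ltn_ord x; have yn := ltn_ord y.
have xy' : (x : nat) != y by [].
rewrite /tdist.
case: (leqP ((y + n - x) %% n) ((x + n - y) %% n)) => ee.
  apply: geo_aux; [lia|lia|].
  move=> u; have un := ltn_ord u; move: ee xy'.
  rewrite !modsub //; case: (leqP u y); case: (leqP u x); case: (leqP x y); case: (leqP y x); lia.
  rewrite hitset'C; apply: geo_aux; [lia|lia|].
move=> u; have un := ltn_ord u; move: ee xy'.
rewrite !modsub //; case: (leqP u y); case: (leqP u x); case: (leqP x y); case: (leqP y x); lia.
Qed.

Lemma count_close (x : 'I_n) m : (#|[set y : 'I_n | (tdist x y < m)%N]| <= m.*2)%N.
Proof.
have xn := ltn_ord x.
pose f1 := fun y : 'I_n => ((x + n - y) %% n)%N.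
pose f2 := fun y : 'I_n => ((y + n - x) %% n)%N.
have i1 : injective f1.
  move=> y z; rewrite /f1 !modsub //; have := ltn_ord y; have := ltn_ord z.
  move=> zn yn h; apply/val_inj => /=; move: h; case: (leqP y x); case: (leqP z x); lia.
have i2 : injective f2.
  move=> y z; rewrite /f2 !modsub //; have := ltn_ord y; have := ltn_ord z.
  move=> zn yn h; apply/val_inj => /=; move: h; case: (leqP x y); case: (leqP x z); lia.
have sub : [set y : 'I_n | (tdist x y < m)%N] \subset
   [set y | (f1 y < m)%N] :|: [set y | (f2 y < m)%N].
  apply/fintype.subsetP => y; rewrite !inE /tdist /f1 /f2; lia.
apply: leq_trans (subset_leq_card sub) _.
apply: leq_trans (leq_card_setU _ _) _.
by rewrite -addnn leq_add // card_le.
Qed.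

End Geo.
Arguments avoidb' {n}.
Arguments hitset' {n}.


Section SeriesH.
Variable R : realType.

Lemma cvg_big_sum (I : Type) (s : seq I) (P : pred I) (g : I -> nat -> R) :
  (forall i, cvgn (g i)) ->
  cvgn (fun n => \sum_(i <- s | P i) g i n) /\
  limn (fun n => \sum_(i <- s | P i) g i n) = \sum_(i <- s | P i) limn (g i).
Proof.
move=> cg; elim: s => [|a s [IH1 IH2]].
  under eq_fun do rewrite big_nil.
  by rewrite big_nil; split; [exact: is_cvg_cst | exact: lim_cst].
under eq_fun do rewrite big_cons.
rewrite big_cons; case: (P a).
  have -> : (fun n => g a n + \sum_(i <- s | P i) g i n) =
     (g a + (fun n => \sum_(i <- s | P i) g i n)) by [].
  split; first exact: is_cvgD.
  by rewrite limD // IH2.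
by split.
Qed.

Lemma series_big_sum (I : Type) (s : seq I) (P : pred I) (f : I -> nat -> R) :
  series (fun r => \sum_(i <- s | P i) f i r) =
  (fun n => \sum_(i <- s | P i) series (f i) n).
Proof.
apply/funext => n; rewrite /series /=; exact: exchange_big.
Qed.

Lemma lim_series_sum (I : Type) (s : seq I) (P : pred I) (f : I -> nat -> R) :
  (forall i, cvgn (series (f i))) ->
  cvgn (series (fun r => \sum_(i <- s | P i) f i r)) /\
  limn (series (fun r => \sum_(i <- s | P i) f i r)) =
    \sum_(i <- s | P i) limn (series (f i)).
Proof.
move=> cf; rewrite series_big_sum; exact: (@cvg_big_sum I s P (fun i => series (f i)) cf).
Qed.

Lemma lim_series_ge0 (f : nat -> R) : (forall r, 0 <= f r) -> cvgn (series f) ->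
  0 <= limn (series f).
Proof.
move=> f0 cf; apply: (le_trans _ (nondecreasing_cvgn_le _ cf 0%N)).
  by rewrite /series /= big_geq.
by apply: (@nondecreasing_series _ f xpredT 0%N) => k _ _; exact: f0.
Qed.

Lemma lim_series_ge_partial (f : nat -> R) K : (forall r, 0 <= f r) ->
  cvgn (series f) -> series f K <= limn (series f).
Proof.
move=> f0 cf; apply: (nondecreasing_cvgn_le _ cf K).
by apply: (@nondecreasing_series _ f xpredT 0%N) => k _ _; exact: f0.
Qed.

Lemma lim_seriesE (f : nat -> R) l : (series f @ \oo --> l)%classic -> limn (series f) = l.
Proof. by move=> h; apply: cvg_lim. Qed.

End SeriesH.


Section Cov.
Variable R : realType.
Variable p : nat -> R.
Hypothesis pge0 : forall r, 0 <= p r.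
Hypothesis pcvg : (series p @ \oo --> (1 : R))%classic.

Lemma cvg_p : cvgn (series p).
Proof. by apply/cvg_ex; exists 1. Qed.

Lemma lim_p : limn (series p) = 1.
Proof. exact: cvg_lim. Qed.

Lemma dom_cvg (f : nat -> R) : (forall r, 0 <= f r <= p r) -> cvgn (series f).
Proof.
move=> hf; apply: (@series_le_cvg R f p) => //.
- by move=> r; case/andP: (hf r).
- by move=> r; case/andP: (hf r).
- exact: cvg_p.
Qed.

Lemma cvg_ind (b : nat -> bool) : cvgn (series (fun r => p r * (b r)%:R)).
Proof.
apply: dom_cvg => r; case: (b r); rewrite ?mulr1 ?mulr0 ?pge0 ?lexx //.
Qed.

Lemma ind_sum (T : finType) (P : pred T) (C : T) (c : R) :
  \sum_(B | P B) c * (C == B)%:R = c * (P C)%:R.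
Proof.
rewrite big_mkcond (bigD1 C) //= eqxx big1 ?addr0.
  by case: (P C); rewrite ?mulr1 ?mulr0.
move=> B; rewrite eq_sym => /negbTE ->; by case: ifP; rewrite ?mulr0.
Qed.

Variable n : nat.

Notation avoidb := (@avoidb' n).

Lemma avoidbU x y A S : avoidb x y (A :|: S) = avoidb x y A && avoidb x y S.
Proof. by rewrite /avoidb !inE !negb_or andbACA. Qed.

Definition sv x y (u : 'I_n) := limn (series (fun r => p r * (avoidb x y (Defs.arc u r))%:R)).
Definition sxy x y := \sum_(u : 'I_n) n%:R^-1 * sv x y u.

Lemma step_ge0 (A B : {set 'I_n}) : 0 <= Defs.step p A B.
Proof.
rewrite /step; apply: sumr_ge0 => u _; apply: mulr_ge0; first by rewrite invr_ge0 ler0n.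
apply: lim_series_ge0; last exact: cvg_ind.
by move=> r; apply: mulr_ge0 => //; rewrite ler0n.
Qed.

Lemma dist_ge0 k (B : {set 'I_n}) : 0 <= Defs.dist p k B.
Proof.
elim: k B => [|k IH] B /=; first by rewrite ler0n.
by apply: sumr_ge0 => A _; apply: mulr_ge0 => //; exact: step_ge0.
Qed.

Lemma sxy_ge0 x y : 0 <= sxy x y.
Proof.
apply: sumr_ge0 => u _; apply: mulr_ge0; first by rewrite invr_ge0 ler0n.
apply: lim_series_ge0; last exact: cvg_ind.
by move=> r; apply: mulr_ge0 => //; rewrite ler0n.
Qed.

Lemma step_avoid x y (A : {set 'I_n}) :
  \sum_(B | avoidb x y B) Defs.step p A B = (avoidb x y A)%:R * sxy x y.
Proof.
rewrite /Defs.step exchange_big /= /sxy mulr_sumr; apply: eq_bigr => u _.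
rewrite -mulr_sumr mulrCA; congr (_ * _).
have [_ <-] := @lim_series_sum R _ (index_enum {set 'I_n}) (avoidb x y)
   (fun B r => p r * (A :|: Defs.arc u r == B)%:R) (fun B => cvg_ind _).
under eq_fun do rewrite ind_sum avoidbU.
case: (avoidb x y A); rewrite ?mul1r ?mul0r.
  by [].
under eq_fun do rewrite /= mulr0.
rewrite (_ : series _ = fun=> 0); first by rewrite lim_cst.
by apply/funext => m; rewrite /series /= big1.
Qed.

Lemma dist_avoid x y k : \sum_(B | avoidb x y B) Defs.dist p k B = sxy x y ^+ k.
Proof.
elim: k => [|k IH] /=.
  rewrite expr0 (eq_bigr (fun B => 1 * (finset.set0 == B)%:R)); last first.
    by move=> B _; rewrite mul1r eq_sym.
  by rewrite ind_sum /avoidb !inE mul1r.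
rewrite exchange_big /=.
under eq_bigr => A _ do rewrite -mulr_sumr step_avoid.
rewrite exprSr -IH mulr_suml.
rewrite [RHS]big_mkcond /=.
apply: eq_bigr => A _.
by case: (avoidb x y A); rewrite /= ?mul1r ?mul0r ?mulr0.
Qed.


Lemma probX_bound (t : R) (E : pred {set 'I_n}) (I : finType) (P : pred I) (s : I -> R) :
  0 <= t -> (forall i, 0 <= s i) ->
  (forall k, \sum_(B | E B) Defs.dist p k B <= \sum_(i | P i) s i ^+ k) ->
  0 <= Defs.probX p t E <= \sum_(i | P i) expR (- t) * expR (t * s i).
Proof.
move=> t0 s0 hk; rewrite /Defs.probX.
set f := fun k => _.
pose g i k := expR (- t) * exp_coeff (t * s i) k.
have gE i : g i = expR (- t) *: exp_coeff (t * s i).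
  by apply/funext => k.
have cg i : cvgn (series (g i)).
  rewrite gE; apply: is_cvg_seriesZ; exact: is_cvg_series_exp_coeff.
have lg i : limn (series (g i)) = expR (- t) * expR (t * s i).
  by rewrite gE lim_seriesZ //; exact: is_cvg_series_exp_coeff.
have [cG lG] := @lim_series_sum R _ (index_enum I) P g cg.
have f0 k : 0 <= f k.
  rewrite /f; apply: mulr_ge0; last by apply: sumr_ge0 => B _; exact: dist_ge0.
  by apply: mulr_ge0; [apply: mulr_ge0; [exact: expR_ge0|exact: exprn_ge0]|rewrite invr_ge0 ler0n].
have fg k : f k <= \sum_(i | P i) g i k.
  rewrite /f /g; apply: (le_trans (ler_wpM2l _ (hk k))).
    by apply: mulr_ge0; [apply: mulr_ge0; [exact: expR_ge0|exact: exprn_ge0]|rewrite invr_ge0 ler0n].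
  rewrite mulr_sumr le_eqVlt; apply/orP; left; apply/eqP; apply: eq_bigr => i _.
  rewrite /exp_coeff /= exprMn; ring.
have g0 k : 0 <= \sum_(i | P i) g i k.
  apply: sumr_ge0 => i _; apply: mulr_ge0; first exact: expR_ge0.
  by apply: exp_coeff_ge0; apply: mulr_ge0.
have cf : cvgn (series f) by apply: (@series_le_cvg R f _ f0 g0 fg cG).
apply/andP; split; first exact: lim_series_ge0.
apply: (le_trans (lim_series_le cf cG fg)).
by rewrite lG le_eqVlt; apply/orP; left; apply/eqP; apply: eq_bigr => i _; rewrite lg.
Qed.


Notation hitset := (@hitset' n).

Lemma sum_ind_card (b : 'I_n -> bool) : \sum_(u : 'I_n) (b u)%:R = #|[set u | b u]|%:R :> R.
Proof.
rewrite (eq_bigr (fun u => if b u then 1 else 0)); last by move=> u _; case: (b u).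
rewrite -big_mkcond /= sumr_const.
by congr (_%:R); apply: eq_card => u; rewrite inE.
Qed.

Lemma cvg_hit x y : cvgn (series (fun r => p r * #|hitset x y r|%:R)).
Proof.
have [cS _] := @lim_series_sum R _ (index_enum 'I_n) xpredT
   (fun u r => p r * (~~ avoidb x y (Defs.arc u r))%:R) (fun u => cvg_ind _).
suff -> : (fun r => p r * #|hitset x y r|%:R) =
   (fun r => \sum_(u <- index_enum 'I_n) p r * (~~ avoidb x y (Defs.arc u r))%:R) by [].
by apply/funext => r; rewrite -mulr_sumr sum_ind_card.
Qed.

Lemma one_sub_sxy x y : (0 < n)%N ->
  1 - sxy x y = n%:R^-1 * limn (series (fun r => p r * #|hitset x y r|%:R)).
Proof.
move=> n0.
pose h u := limn (series (fun r => p r * (~~ avoidb x y (Defs.arc u r))%:R)).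
have svE u : sv x y u = 1 - h u.
  rewrite /sv /h -[X in X - _]lim_p -lim_seriesB; [|exact: cvg_p|exact: cvg_ind].
  congr (limn (series _)); apply/funext => r /=.
  change (p r * (avoidb x y (Defs.arc u r))%:R = p r - p r * (~~ avoidb x y (Defs.arc u r))%:R).
  by case: (avoidb x y (Defs.arc u r)); rewrite /= ?mulr1 ?mulr0 ?subr0 ?subrr.
have [_ hS] := @lim_series_sum R _ (index_enum 'I_n) xpredT
   (fun u r => p r * (~~ avoidb x y (Defs.arc u r))%:R) (fun u => cvg_ind _).
have -> : limn (series (fun r => p r * #|hitset x y r|%:R)) = \sum_u h u.
  rewrite -hS; congr (limn (series _)); apply/funext => r.
  by rewrite -mulr_sumr sum_ind_card.
rewrite /sxy; under eq_bigr do rewrite svE mulrBr mulr1.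
rewrite sumrB sumr_const card_ord -mulr_sumr.
have nn : n%:R != 0 :> R by rewrite pnatr_eq0 -lt0n.
by rewrite -[n%:R^-1 *+ n]mulr_natr (mulVf nn) opprB addrC subrK.
Qed.

Lemma one_sub_sxy_ge x y K : (0 < n)%N ->
  n%:R^-1 * \sum_(r < K) p r * #|hitset x y r|%:R <= 1 - sxy x y.
Proof.
move=> n0; rewrite one_sub_sxy //; apply: ler_wpM2l; first by rewrite invr_ge0 ler0n.
rewrite -(big_mkord xpredT (fun r => p r * #|hitset x y r|%:R)).
apply: (@lim_series_ge_partial R (fun r => p r * #|hitset x y r|%:R) K).
  by move=> r; apply: mulr_ge0 => //; rewrite ler0n.
exact: cvg_hit.
Qed.


Lemma pair_bound (x y : 'I_n) K t : (0 < n)%N -> x != y -> (K.*2 <= n)%N -> 0 <= t ->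
  expR (- t) * expR (t * sxy x y) <=
  expR (- (t * n%:R^-1 * \sum_(r < K) p r * (r + minn r (tdist x y))%:R)).
Proof.
move=> n0 xy Kn t0.
rewrite -expRD ler_expR.
have h1 := one_sub_sxy_ge x y K n0.
have h2 : \sum_(r < K) p r * (r + minn r (tdist x y))%:R <=
          \sum_(r < K) p r * #|hitset x y r|%:R.
  apply: ler_sum => r _; apply: ler_wpM2l => //; rewrite ler_nat.
  apply: geo => //; have := ltn_ord r; lia.
have h3 : t * (n%:R^-1 * \sum_(r < K) p r * (r + minn r (tdist x y))%:R) <= t * (1 - sxy x y).
  apply: ler_wpM2l => //; apply: (le_trans _ h1).
  by apply: ler_wpM2l; [rewrite invr_ge0 ler0n | exact: h2].
move: h3; rewrite mulrBr mulr1 mulrA; lra.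
Qed.


Lemma tdist_gt0 (x y : 'I_n) : x != y -> (0 < tdist x y)%N.
Proof.
move=> xy; have xn := ltn_ord x; have yn := ltn_ord y.
have xy' : (x : nat) != y by [].
rewrite /tdist !modsub //; move: xy'; case: (leqP x y); case: (leqP y x); lia.
Qed.

Lemma probA_bound (mu alpha beta : R) K A P e1 e2 :
  p 0%N = 0 -> 0 < alpha -> 0 < mu -> (2 <= n)%N -> (K.*2 <= n)%N ->
  A = \sum_(r < K) r%:R * p r ->
  P = \sum_(r < K) p r ->
  e1 = alpha * (A + P) / mu ->
  e2 = alpha * (2 * A) / mu ->
  0 <= probA p n mu alpha beta <=
  n%:R * (2 * K%:R * expR (- (e1 * ln n%:R)) +
          2 * (n%:R `^ beta + 1) * expR (- (e2 * ln n%:R))).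
Proof.
move=> p0 a0 m0 n2 Kn AE PE e1E e2E.
have n0 : (0 < n)%N by lia.
have nR : 0 < n%:R :> R by rewrite ltr0n.
have ln0 : 0 <= ln (n%:R : R).
  apply: (@ln_ge0 R (n%:R)); rewrite ler1n; lia.
set t := alpha * n%:R * ln n%:R / mu.
have t0 : 0 <= t.
  rewrite /t; apply: divr_ge0; last exact: ltW.
  by apply: mulr_ge0 => //; apply: mulr_ge0; exact: ltW.
pose G := fun xy : 'I_n * 'I_n => (xy.1 != xy.2) && ((tdist xy.1 xy.2)%:R < n%:R `^ beta).
have hk : forall j : nat, \sum_(B : {set 'I_n} | close_pair beta B) Defs.dist p j B <=
     \sum_(xy | G xy) sxy xy.1 xy.2 ^+ j.
  move=> k.
  rewrite [X in _ <= X](eq_bigr (fun xy : 'I_n * 'I_n => \sum_(B : {set 'I_n})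
      (if avoidb xy.1 xy.2 B then Defs.dist p k B else 0))); last first.
    by move=> xy _; rewrite -dist_avoid big_mkcond.
  rewrite exchange_big /= big_mkcond /=; apply: ler_sum => B _.
  case: ifP => hc; last first.
    by apply: sumr_ge0 => xy _; case: ifP => _ //; exact: dist_ge0.
  move: hc => /existsP [x /existsP [y /and4P [xy hx hy hd]]].
  rewrite (bigD1 (x, y)) /=; last by rewrite /G /= xy hd.
  rewrite /avoidb' hx hy /= lerDl; apply: sumr_ge0 => xy' _.
  by case: ifP => _ //; exact: dist_ge0.
have [hP0 hP] := andP (@probX_bound t (close_pair beta) _ G
   (fun xy => sxy xy.1 xy.2) t0 (fun xy => sxy_ge0 _ _) hk).
rewrite /probA -/t.
apply/andP; split; first exact: hP0.
apply: (le_trans hP).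
set E1 := expR (- (e1 * ln n%:R)).
set E2 := expR (- (e2 * ln n%:R)).
set X := n%:R `^ beta.
have X0 : 0 <= X by exact: powR_ge0.
pose H := fun x y : 'I_n => ((tdist x y < K)%N)%:R * E1 + (((tdist x y)%:R < X)%R)%:R * E2.
have H0 x y : 0 <= H x y.
  by apply: addr_ge0; apply: mulr_ge0; rewrite ?ler0n ?expR_ge0.
have tn : t * n%:R^-1 = alpha * ln n%:R / mu.
  rewrite /t; field; apply/andP; split; [exact: lt0r_neq0 | exact: lt0r_neq0].
have a0' : 0 <= alpha * ln n%:R / mu.
  by apply: divr_ge0; [apply: mulr_ge0 => //; exact: ltW | exact: ltW].
have step1 : \sum_(xy | G xy) expR (- t) * expR (t * sxy xy.1 xy.2) <=
             \sum_(xy : 'I_n * 'I_n) H xy.1 xy.2.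
  rewrite big_mkcond /=; apply: ler_sum => xy _.
  case: ifP => hG; last exact: H0.
  move/andP: hG => [hxy hd].
  apply: (le_trans (@pair_bound xy.1 xy.2 K t n0 hxy Kn t0)).
  rewrite tn.
  have d0 := @tdist_gt0 xy.1 xy.2 hxy.
  case: (ltnP (tdist xy.1 xy.2) K) => dK.
    apply: (@le_trans _ _ E1); last by rewrite /H dK /= mul1r lerDl; apply: mulr_ge0; rewrite ?ler0n ?expR_ge0.
    rewrite /E1 ler_expR lerN2 e1E.
    rewrite [X in X <= _](_ : _ = alpha * ln n%:R / mu * (A + P)); last by field; exact: lt0r_neq0.
    apply: ler_wpM2l => //.
    rewrite AE PE -big_split /=; apply: ler_sum => r _.
    case: (posnP r) => [-> | r0]; first by rewrite p0 !mulr0 mul0r addr0.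
    have m1 : (1 <= minn r (tdist xy.1 xy.2))%N by rewrite leq_min; lia.
    have := pge0 r; rewrite natrD mulrDr; move: m1; rewrite -(ler_nat R) => m1.
    nra.
  apply: (@le_trans _ _ E2); last first.
    by rewrite /H hd ltnNge dK /= mul1r mul0r add0r.
  rewrite /E2 ler_expR lerN2 e2E.
  rewrite [X in X <= _](_ : _ = alpha * ln n%:R / mu * (2 * A)); last by field; exact: lt0r_neq0.
  apply: ler_wpM2l => //.
  rewrite AE mulr_sumr; apply: ler_sum => r _.
  have -> : minn r (tdist xy.1 xy.2) = r by apply/minn_idPl; have := ltn_ord r; lia.
  by rewrite natrD; have := pge0 r; nra.
apply: (le_trans step1).
rewrite -(pair_big xpredT xpredT (fun x y => H x y)) /=.
have hx : forall x : 'I_n, \sum_(y : 'I_n) H x y <= 2 * K%:R * E1 + 2 * (X + 1) * E2.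
  move=> x; rewrite /H big_split /= -!mulr_suml !sum_ind_card.
  apply: lerD; apply: ler_wpM2r; rewrite ?expR_ge0 //.
    have := @count_close n x K; rewrite -(ler_nat R) => h; apply: (le_trans h).
    by rewrite -mul2n natrM.
  have sub : [set y : 'I_n | ((tdist x y)%:R < X)%R] \subset
             [set y : 'I_n | (tdist x y < (Num.trunc X).+1)%N].
    apply/fintype.subsetP => y; rewrite !inE ltnS => h.
    rewrite leqNgt; apply/negP; rewrite (truncn_lt_nat _ X0) => h'.
    by move: (lt_trans h h'); rewrite ltxx.
  have := subset_leq_card sub; rewrite -(ler_nat R) => h1.
  have := @count_close n x (Num.trunc X).+1; rewrite -(ler_nat R) => h2.
  apply: (le_trans h1); apply: (le_trans h2).
  rewrite -mul2n natrM; apply: ler_wpM2l => //.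
  by rewrite -natr1 lerD2r truncn_le.
apply: (@le_trans _ _ (\sum_(x < n) (2 * K%:R * E1 + 2 * (X + 1) * E2))).
  by apply: ler_sum => x _; exact: hx.
by rewrite sumr_const card_ord -[_ *+ n]mulr_natl.
Qed.

End Cov.

Lemma lim_expln (R : realType) (c : R) : 0 < c ->
  ((fun n : nat => expR (- (c * ln n%:R))) @ \oo --> 0)%classic.
Proof.
move=> c0.
have h : ((fun n : nat => c * ln n%:R) @ \oo --> +oo)%classic.
  apply/cvgryPge => A.
  have := @nbhs_infty_ger R (expR (A / c)).
  apply: filterS => n hn.
  have np : 0 < n%:R :> R by apply: lt_le_trans hn; exact: expR_gt0.
  have : A / c <= ln n%:R.
    by rewrite -[X in X <= _]expRK ler_ln // ?posrE ?expR_gt0.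
  by rewrite ler_pdivrMr // mulrC.
exact: (cvg_comp _ _ h (@cvgr_expR R)).
Qed.

Local Open Scope classical_set_scope.
Local Open Scope ring_scope.

Theorem mainTheorem6 (R : realType) (beta mu : R) :
  0 < beta < 1 ->
  exists alpha : R, 0 < alpha < 1 /\
    forall p : nat -> R,
      p 0%N = 0 ->
      (forall r, 0 <= p r) ->
      series p @ \oo --> (1 : R) ->
      series (fun r => r%:R * p r) @ \oo --> (mu : R) ->
      (fun n => probA p n mu alpha beta) @ \oo --> (0 : R).
Proof.
move=> /andP [b0 b1].
have mu0 : 0 <= `|mu| := normr_ge0 mu.
pose g := (1 - beta) / (2 * (`|mu| + 2)).
have D0 : 0 < 2 * (`|mu| + 2) by lra.
have gE : g * (2 * (`|mu| + 2)) = 1 - beta.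
  by rewrite /g -mulrA mulVf ?mulr1 //; exact: lt0r_neq0.
have g0 : 0 < g by rewrite /g divr_gt0 //; lra.
have g1 : g < 1 by nra.
exists (1 - g); split; first by apply/andP; split; lra.
move=> p p0 pge0 pcvg mcvg.
have cP : cvgn (series p) by apply/cvg_ex; exists 1.
have cM : cvgn (series (fun r => r%:R * p r)) by apply/cvg_ex; exists mu.
have mu1 : 1 <= mu.
  have hle : forall r, p r <= r%:R * p r.
    case=> [|r]; first by rewrite p0 mulr0.
    have := pge0 r.+1; have : 1 <= r.+1%:R :> R by rewrite ler1n.
    nra.
  have := lim_series_le cP cM hle.
  by rewrite (@lim_seriesE R _ _ pcvg) (@lim_seriesE R _ _ mcvg).
have amu : `|mu| = mu by apply: ger0_norm; lra.
rewrite amu in gE.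
have F1 : mu < (mu + 1) * (1 - g) by nra.
have F2 : 1 + beta < 2 * (1 - g) by nra.
have h1 : \forall K \near \oo,
    mu / (1 - g) < series (fun r => r%:R * p r) K + series p K.
  apply: (cvgr_gt (mu + 1)); first exact: (cvgD mcvg pcvg).
  by rewrite ltr_pdivrMr //; lra.
have h2 : \forall K \near \oo,
    (1 + beta) * mu / (2 * (1 - g)) < series (fun r => r%:R * p r) K.
  apply: (cvgr_gt mu); first exact: mcvg.
  rewrite ltr_pdivrMr; nra.
have [K [hK1 hK2]] := filter_ex (filterI h1 h2).
set A := series (fun r => r%:R * p r) K in hK1 hK2.
set P := series p K in hK1.
have AE : A = \sum_(r < K) r%:R * p r by rewrite /A seriesEord.
have PE : P = \sum_(r < K) p r by rewrite /P seriesEord.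
pose e1 := (1 - g) * (A + P) / mu.
pose e2 := (1 - g) * (2 * A) / mu.
have mu0' : 0 < mu by lra.
have e1g : 1 < e1.
  rewrite /e1 ltr_pdivlMr // mul1r.
  by move: hK1; rewrite ltr_pdivrMr; lra.
have e2g : 1 + beta < e2.
  rewrite /e2 ltr_pdivlMr //.
  by move: hK2; rewrite ltr_pdivrMr; nra.
pose b := fun n : nat => 2 * K%:R * expR (- ((e1 - 1) * ln n%:R)) +
   2 * expR (- ((e2 - 1 - beta) * ln n%:R)) + 2 * expR (- ((e2 - 1) * ln n%:R)).
have hb : b @ \oo --> 0.
  rewrite (_ : 0 = 2 * K%:R * 0 + 2 * 0 + 2 * 0); last by rewrite !mulr0 !addr0.
  apply: cvgD; first apply: cvgD.
  - by apply: cvgMr; apply: lim_expln; lra.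
  - by apply: cvgMr; apply: lim_expln; lra.
  - by apply: cvgMr; apply: lim_expln; lra.
apply: (squeeze_cvgr _ (cvg_cst 0) hb).
have := nbhs_infty_ge (maxn K.*2 2); apply: filterS => n hn.
have n2 : (2 <= n)%N by move: hn; rewrite geq_max => /andP [].
have Kn : (K.*2 <= n)%N by move: hn; rewrite geq_max => /andP [].
have [H0 Hb] := andP (@probA_bound R p pge0 pcvg n mu (1 - g) beta K A P e1 e2
   p0 ltac:(lra) mu0' n2 Kn AE PE erefl erefl).
apply/andP; split => //; apply: (le_trans Hb).
have nR : 0 < n%:R :> R by rewrite ltr0n (leq_trans _ n2).
have nE : n%:R = expR (ln (n%:R : R)) by rewrite lnK // posrE.
have XE : n%:R `^ beta = expR (beta * ln (n%:R : R)).
  by rewrite /powR ifF // gt_eqF.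
rewrite /b XE.
set L := ln (n%:R : R).
rewrite [in X in _ <= X]/L.
rewrite [X in X * _ <= _]nE.
rewrite (_ : - ((e1 - 1) * L) = L + - (e1 * L)); last by ring.
rewrite (_ : - ((e2 - 1 - beta) * L) = L + beta * L + - (e2 * L)); last by ring.
rewrite (_ : - ((e2 - 1) * L) = L + - (e2 * L)); last by ring.
rewrite !expRD le_eqVlt; apply/orP; left; apply/eqP.
ring.
Qed.
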